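(* Let $R$ be a ring with identity and $a,b,c,p,q\in R$, and suppose there exist $p',q'\in R$ with $q'qb=b$ and $cpp'=c$. The following are equivalent: (i) $paq$ is $(b,c)$-invertible; (ii) $a$ is $(qb,cp)$-invertible. In this case, if $y$ is the $(b,c)$-inverse of $paq$ and $w$ is the $(qb,cp)$-inverse of $a$, then $w=qyp$.
   Context: For $\alpha,b,c\in R$, $\alpha$ is $(b,c)$-invertible if there is $y\in R$ with $y\in (bRy)\cap(yRc)$, $y\alpha b=b$ and $c\alpha y=c$, where $xR=\{xr:r\in R\}$ and $Rx=\{rx:r\in R\}$; such $y$ is unique and called the $(b,c)$-inverse of $\alpha$. *)

(* Defs.v *)
From mathcomp Require Import all_boot all_algebra.
Set Implicit Arguments. Unset Strict Implicit. Unset Printing Implicit Defensive.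
Import GRing.Theory.
Local Open Scope ring_scope.

Definition is_bc_inverse (R : pzRingType) (a b c y : R) : Prop :=
  [/\ (exists r : R, y = b * r * y),
      (exists s : R, y = y * s * c),
      y * a * b = b &
      c * a * y = c].

Definition bc_invertible (R : pzRingType) (a b c : R) : Prop :=
  exists y : R, is_bc_inverse a b c y.

(* Main.v *)
Require Import Defs.
From mathcomp Require Import all_boot all_algebra.
Local Open Scope ring_scope.
Import GRing.Theory.

Lemma r3 {R : pzRingType} {x y z w : R} : x * y * z = w -> forall t, x * (y * (z * t)) = w * t.
Proof. by move=> <- t; rewrite !mulrA. Qed.
Lemma r3e {R : pzRingType} {x y z w : R} : x * y * z = w -> x * (y * z) = w.
Proof. by move=> <-; rewrite !mulrA. Qed.
Lemma r4 {R : pzRingType} {x y z u w : R} : x * y * z * u = w -> forall t, x * (y * (z * (u * t))) = w * t.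
Proof. by move=> <- t; rewrite !mulrA. Qed.

Lemma r4e {R : pzRingType} {x y z u w : R} : x * y * z * u = w -> x * (y * (z * u)) = w.
Proof. by move=> <-; rewrite !mulrA. Qed.

Lemma bc_uniq (R : pzRingType) (a b c w1 w2 : R) :
  is_bc_inverse a b c w1 -> is_bc_inverse a b c w2 -> w1 = w2.
Proof.
case=> [[r1 H1] [s1 H1'] e1 f1] [[r2 H2] [s2 H2'] e2 f2].
have A : w1 = w1 * a * w2.
  by rewrite [in LHS]H1' -[in LHS]f2 !mulrA -H1'.
have B : w2 = w1 * a * w2.
  by rewrite [in LHS]H2 -[in LHS]e1 -!mulrA [b * (r2 * w2)]mulrA -H2.
by rewrite A -B.
Qed.

Lemma fwd_lem (R : pzRingType) (a b c p q p' q' y : R) :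
 q' * q * b = b -> c * p * p' = c ->
 is_bc_inverse (p * a * q) b c y ->
 is_bc_inverse a (q * b) (c * p) (q * y * p).
Proof.
move=> hq hp [[r H] [s H'] e f].
  have Y1 : q' * q * y = y by rewrite [in LHS]H -!mulrA (r3 hq) !mulrA -H.
  have Y2 : y * p * p' = y by rewrite [in LHS]H' -!mulrA (r3e hp) !mulrA -H'.
  split.
  - exists (r * q'). rewrite -!mulrA (r3 Y1) [in LHS]H !mulrA; done.
  - exists (p' * s). by rewrite -!mulrA (r3 Y2) [in LHS]H' !mulrA.
  - rewrite -!mulrA. move: e; rewrite -!mulrA. move=> e. by rewrite e.
  - by move: f; rewrite !mulrA => ->.
Qed.

Arguments bc_uniq {R a b c w1 w2}.
Arguments fwd_lem {R a b c p q p' q' y}.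

Theorem corollary3p5 (R : pzRingType) (a b c p q : R) :
  (exists p' q' : R, q' * q * b = b /\ c * p * p' = c) ->
  (bc_invertible (p * a * q) b c <-> bc_invertible a (q * b) (c * p)) /\
  (forall y w : R, is_bc_inverse (p * a * q) b c y ->
     is_bc_inverse a (q * b) (c * p) w -> w = q * y * p).
Proof.
case=> p' [q' [hq hp]].
split; last first.
  by move=> y w Hy Hw; apply: (bc_uniq Hw); apply: (fwd_lem hq hp).
split; first by case=> y Hy; exists (q * y * p); apply: (fwd_lem hq hp).
case=> w [[r H] [s H'] e f].
have E1 : b * r * q * b = b.
  have Q : q * b * r * (q * b) = q * b.
    transitivity (q * b * r * (w * a * (q * b))); first by rewrite e.
    by rewrite !mulrA -[q * b * r * w]H -e mulrA.
  by move: (congr1 (fun x => q' * x) Q); rewrite !mulrA hq.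
have E2 : c * p * s * c = c.
  have Q : c * p * s * (c * p) = c * p.
    transitivity ((c * p * a * w) * s * (c * p)); first by rewrite f.
    by rewrite -(mulrA _ s) -(mulrA _ w) (mulrA w) -H' f.
  by move: (congr1 (fun x => x * p') Q); rewrite -!mulrA !(mulrA c p p') hp.
have Hn : q * b * r * w = w by rewrite -H.
have H'n : w * s * c * p = w by rewrite -mulrA -H'.
have fn : c * p * a * w = c * p by [].
exists (b * r * w * s * c); split.
- exists (r * q). by rewrite !mulrA E1.
- exists (p * s). by rewrite -!mulrA (r4e E2) !mulrA.
- rewrite -!mulrA (r4 H'n) (r3e e); by rewrite !mulrA.
- rewrite -!mulrA (r4 Hn) (r4 fn). by rewrite !mulrA.
Qed.
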